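(* Let $L>0$, $N\ge 1$, grid points $x_i$, $i=0,\dots,N$, evenly spaced on $[0,L]$, and let $\mathbf D,\mathbf H$ be $(N+1)\times(N+1)$ real matrices with $\mathbf H$ diagonal and positive definite, $\mathbf H\mathbf D=\mathbf Q$, and $\mathbf u^T(\mathbf Q+\mathbf Q^T)\mathbf v=u_Nv_N-u_0v_0$ for all $\mathbf u,\mathbf v\in\mathbb{R}^{N+1}$. Let $\bar{\mathbf c}=(\bar c_0,\dots,\bar c_N)^T$ with all $\bar c_i>0$, and $\mathbf a,\mathbf b,\mathbf c,\mathbf d\in\mathbb{R}^{N+1}$. Define $\mathbf\Lambda=\mathrm{diag}(-\bar{\mathbf c},\bar{\mathbf c})$, $\mathbf D_2=\mathbf I_2\otimes\mathbf D$, $\mathbf H_2=\mathbf I_2\otimes\mathbf H$, $$\mathbf M_{\bar c}=\begin{pmatrix}-\mathrm{diag}(\mathbf D\bar{\mathbf c})&0\\0&\mathrm{diag}(\mathbf D\bar{\mathbf c})\end{pmatrix},\quad \tilde{\mathbf B}=\begin{pmatrix}\mathrm{diag}(\mathbf a)&\mathrm{diag}(\mathbf b)\\\mathrm{diag}(\mathbf c)&\mathrm{diag}(\mathbf d)\end{pmatrix},$$ and $\mathbf\Lambda_D=\tfrac12(\mathbf\Lambda\mathbf D_2+\mathbf D_2\mathbf\Lambda)-\tfrac12\mathbf M_{\bar c}$. Let $R_0,R_L\in[-1,1]$ and set $\alpha_0=-\bar c_0$, $\alpha_L=-\bar c_N$. Let $\mathbf W(t)=(\mathbf w_1(t)^T,\mathbf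 w_2(t)^T)^T\in\mathbb{R}^{2(N+1)}$, with components $w_{k,i}$, be a solution of $$\mathbf W_t+\mathbf\Lambda_D\mathbf W=\tilde{\mathbf B}\mathbf W+\alpha_0\mathbf H_2^{-1}(w_{2,0}-R_0w_{1,0})(E_2\otimes e_0)+\alpha_L\mathbf H_2^{-1}(w_{1,N}-R_Lw_{2,N})(E_1\otimes e_N),$$ where $E_j\in\mathbb{R}^2$ and $e_j\in\mathbb{R}^{N+1}$ are standard basis vectors. Let $\mathbf E_h=\mathbf W^T\mathbf H_2\mathbf W$ and let $\|\cdot\|_{\mathbf H}$ denote the operator norm induced by the inner product $(\mathbf U,\mathbf V)_{\mathbf H}=\mathbf U^T\mathbf H_2\mathbf V$. Then $$\frac{d\mathbf E_h}{dt}\le 2\big(\|\tilde{\mathbf B}\|_{\mathbf H}+\|\mathbf M_{\bar c}\|_{\mathbf H}\big)\mathbf E_h .$$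
   Context: This is the summation-by-parts / simultaneous-approximation-term (SBP-SAT) semi-discretization of $W_t+\Lambda(x)W_x=\tilde B(x)W$, $\Lambda=\mathrm{diag}(-\bar c,\bar c)$, with boundary conditions $w_2(0,t)=R_0w_1(0,t)$, $w_1(L,t)=R_Lw_2(L,t)$ and zero boundary and source data; $\bar{\mathbf c},\mathbf a,\dots$ are the grid values of the coefficient functions. *)

(* Defs.v *)
From HB Require Import structures.
From mathcomp Require Import all_boot all_order all_algebra.
From mathcomp Require Import all_classical all_reals all_analysis.
Set Implicit Arguments. Unset Strict Implicit. Unset Printing Implicit Defensive.
Import Order.TTheory GRing.Theory Num.Theory.
Import numFieldNormedType.Exports.
Local Open Scope ring_scope.
Local Open Scope classical_set_scope.

Section SBP.
Variable R : realType.

Definition kron2 n (A : 'M[R]_n) : 'M[R]_(n + n) := block_mx A 0 0 A.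

Definition posdef n (A : 'M[R]_n) : Prop :=
  forall u : 'cV[R]_n, u != 0 -> 0 < (u^T *m A *m u) 0 0.

Definition diagc n (v : 'cV[R]_n) : 'M[R]_n := diag_mx v^T.

Definition Lam n (cb : 'cV[R]_n) : 'M[R]_(n + n) :=
  block_mx (- diagc cb) 0 0 (diagc cb).

Definition Mcbar n (D : 'M[R]_n) (cb : 'cV[R]_n) : 'M[R]_(n + n) :=
  block_mx (- diagc (D *m cb)) 0 0 (diagc (D *m cb)).

Definition Btilde n (a b c d : 'cV[R]_n) : 'M[R]_(n + n) :=
  block_mx (diagc a) (diagc b) (diagc c) (diagc d).

Definition LamD n (D : 'M[R]_n) (cb : 'cV[R]_n) : 'M[R]_(n + n) :=
  2^-1 *: (Lam cb *m kron2 D + kron2 D *m Lam cb) - 2^-1 *: Mcbar D cb.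

Definition energy n (H : 'M[R]_n) (W : 'cV[R]_(n + n)) : R :=
  (W^T *m kron2 H *m W) 0 0.

Definition normH n (H : 'M[R]_n) (W : 'cV[R]_(n + n)) : R :=
  Num.sqrt (energy H W).

Definition opnormH n (H : 'M[R]_n) (A : 'M[R]_(n + n)) : R :=
  sup [set r : R | exists U : 'cV[R]_(n + n),
          U != 0 /\ r = normH H (A *m U) / normH H U].

(* right-hand side of the semi-discrete system, solved for W_t *)
Definition sbp_rhs (N : nat) (D H : 'M[R]_N.+1) (cb a b c d : 'cV[R]_N.+1)
    (R0 RL : R) (W : 'cV[R]_(N.+1 + N.+1)) : 'cV[R]_(N.+1 + N.+1) :=
  let w1 i := W (lshift N.+1 i) 0 in
  let w2 i := W (rshift N.+1 i) 0 in
  let alpha0 := - cb ord0 0 in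
  let alphaL := - cb ord_max 0 in
  let e0 : 'cV[R]_N.+1 := delta_mx ord0 0 in
  let eN : 'cV[R]_N.+1 := delta_mx ord_max 0 in
  - (LamD D cb *m W) + Btilde a b c d *m W
  + (alpha0 * (w2 ord0 - R0 * w1 ord0)) *: (invmx (kron2 H) *m col_mx 0 e0)
  + (alphaL * (w1 ord_max - RL * w2 ord_max)) *: (invmx (kron2 H) *m col_mx eN 0).

End SBP.

(* Main.v *)
Require Import Defs.
From HB Require Import structures.
From mathcomp Require Import all_boot all_order all_algebra.
From mathcomp Require Import all_classical all_reals all_analysis.
From mathcomp Require Import ring lra.
Import Order.TTheory GRing.Theory Num.Theory.
Import numFieldNormedType.Exports.
Local Open Scope ring_scope.
Local Open Scope classical_set_scope.

Section G.
Variable R : realType.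
Variable n : nat.
Variable G : 'M[R]_n.
Hypothesis Gd : forall i j, i != j -> G i j = 0.
Hypothesis Gp : forall i, 0 < G i i.

Definition Bf (u v : 'cV[R]_n) := (u^T *m G *m v) 0 0.

Lemma BfE u v : Bf u v = \sum_i G i i * (u i 0 * v i 0).
Proof.
rewrite /Bf mxE; apply: eq_bigr => j _; rewrite mxE (bigD1 j) //= big1 ?addr0.
  by rewrite !mxE; ring.
by move=> k kj; rewrite Gd ?mulr0.
Qed.

Lemma BfC u v : Bf u v = Bf v u.
Proof. rewrite !BfE; apply: eq_bigr => i _; ring. Qed.

Lemma Bf_ge0 u : 0 <= Bf u u.
Proof. rewrite BfE; apply: sumr_ge0 => i _; apply: mulr_ge0; [exact: ltW | by rewrite -expr2 sqr_ge0]. Qed.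

Lemma Bf_eq0 u : Bf u u = 0 -> u = 0.
Proof.
rewrite BfE => /eqP; rewrite psumr_eq0 => [/allP H|i _]; last first.
  by apply: mulr_ge0; [exact: ltW | rewrite -expr2 sqr_ge0].
apply/matrixP => i j; rewrite (ord1 j) mxE.
have /= /eqP := H i (mem_index_enum _).
by move/eqP; rewrite mulf_eq0 (gt_eqF (Gp i)) /= mulf_eq0 orbb => /eqP.
Qed.

Lemma BfBZl k u v w : Bf (k *: u - v) w = k * Bf u w - Bf v w.
Proof. by rewrite !BfE mulr_sumr -sumrB; apply: eq_bigr => i _; rewrite !mxE; ring. Qed.

Lemma BfBZr k u v w : Bf w (k *: u - v) = k * Bf w u - Bf w v.
Proof. by rewrite !BfE mulr_sumr -sumrB; apply: eq_bigr => i _; rewrite !mxE; ring. Qed.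

Lemma Bf_cs k u v : 0 <= k -> Bf v v <= k ^+ 2 * Bf u u -> Bf u v <= k * Bf u u.
Proof.
move=> k0 hv; have := Bf_ge0 (k *: u - v).
rewrite BfBZl !BfBZr (BfC v u) => h.
case: (eqVneq k 0) => [k00|kn0]; last first.
  have kp : 0 < k by rewrite lt_def kn0 k0.
  rewrite -(ler_pM2l kp); nra.
subst k.
have /Bf_eq0 -> : Bf v v = 0.
  apply/le_anti; rewrite Bf_ge0 andbT; by move: hv; rewrite expr2 !mul0r.
by rewrite BfE big1 ?mul0r // => i _; rewrite mxE; ring.
Qed.

Lemma sq_sum (x : 'I_n -> R) : (\sum_i x i) ^+ 2 <= n%:R * \sum_i x i ^+ 2.
Proof.
have h2 : 2 * (\sum_i x i) ^+ 2 <= 2 * (n%:R * \sum_i x i ^+ 2); last by rewrite ler_pM2l in h2.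
have -> : 2 * (\sum_i x i) ^+ 2 = \sum_i \sum_j (2 * x i * x j).
  rewrite expr2 mulr_suml mulr_sumr; apply: eq_bigr => i _.
  by rewrite mulr_sumr mulr_sumr; apply: eq_bigr => j _; ring.
apply: (@le_trans _ _ (\sum_i \sum_(j < n) (x i ^+ 2 + x j ^+ 2))).
  apply: ler_sum => i _; apply: ler_sum => j _.
  have := sqr_ge0 (x i - x j); nra.
rewrite (eq_bigr (fun i => n%:R * x i ^+ 2 + \sum_j x j ^+ 2)); last first.
  by move=> i _; rewrite big_split /= sumr_const card_ord mulr_natl.
rewrite big_split /= sumr_const card_ord -mulr_natl.
rewrite -mulr_sumr; lra.
Qed.

Lemma Bf_term (u : 'cV[R]_n) j : G j j * u j 0 ^+ 2 <= Bf u u.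
Proof.
rewrite BfE (bigD1 j) //= expr2 lerDl; apply: sumr_ge0 => i _.
by apply: mulr_ge0; [exact: ltW | rewrite -expr2 sqr_ge0].
Qed.

Lemma Bf_bound (A : 'M[R]_n) : exists C, 0 <= C /\ forall u, Bf (A *m u) (A *m u) <= C * Bf u u.
Proof.
exists (\sum_i G i i * (n%:R * \sum_j (A i j ^+ 2 / G j j))); split.
  apply: sumr_ge0 => i _; apply: mulr_ge0; first exact: ltW.
  apply: mulr_ge0 => //; apply: sumr_ge0 => j _; apply: mulr_ge0; first exact: sqr_ge0.
  by rewrite invr_ge0 ltW.
move=> u; rewrite [X in X <= _]BfE mulr_suml; apply: ler_sum => i _.
rewrite -expr2 -mulrA ler_pM2l //.
apply: (le_trans (y := n%:R * \sum_j (A i j * u j 0) ^+ 2)).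
  by rewrite mxE; apply: sq_sum.
rewrite -mulrA ler_wpM2l ?ler0n //.
rewrite mulr_suml; apply: ler_sum => j _.
have hu : u j 0 ^+ 2 <= Bf u u / G j j.
  by rewrite ler_pdivlMr // mulrC Bf_term.
apply: (le_trans (y := A i j ^+ 2 * (Bf u u / G j j))).
  by rewrite exprMn ler_wpM2l ?sqr_ge0.
by rewrite mulrA mulrAC.
Qed.

Lemma Bf_gt0 u : u != 0 -> 0 < Bf u u.
Proof. move=> un; rewrite lt_def Bf_ge0 andbT; apply/eqP => /Bf_eq0 h; by rewrite h eqxx in un. Qed.

Lemma Bf0 v : Bf 0 v = 0.
Proof. by rewrite BfE big1 // => i _; rewrite mxE; ring. Qed.

Definition ratioS (A : 'M[R]_n) := [set r : R | exists U : 'cV[R]_n,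
  U != 0 /\ r = Num.sqrt (Bf (A *m U) (A *m U)) / Num.sqrt (Bf U U)].

Definition opn A := sup (ratioS A).

Lemma opn_prop A : (0 < n)%N -> 0 <= opn A /\ forall u, Bf (A *m u) (A *m u) <= opn A ^+ 2 * Bf u u.
Proof.
move=> n0; have [C [C0 hC]] := Bf_bound A.
have U0 : (const_mx 1 : 'cV[R]_n) != 0.
  apply/eqP => /matrixP /(_ (Ordinal n0) 0); rewrite !mxE => /eqP; by rewrite oner_eq0.
have hs : has_sup (ratioS A).
  split; first by eexists; exists (const_mx 1); split; [exact: U0| reflexivity].
  exists (Num.sqrt C) => r [U [Un ->]].
  have hp := Bf_gt0 _ Un.
  rewrite ler_pdivrMr ?sqrtr_gt0 // -sqrtrM // ler_sqrt ?mulr_ge0 ?Bf_ge0 //.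
have ub := sup_upper_bound hs.
have k0 : 0 <= opn A.
  apply: le_trans (ub _ _); last by exists (const_mx 1); split; [exact: U0| reflexivity].
  by rewrite divr_ge0 ?sqrtr_ge0.
split => // u; case: (eqVneq u 0) => [->|un].
  by rewrite mulmx0 !Bf0 mulr0.
have hp := Bf_gt0 _ un.
have : Num.sqrt (Bf (A *m u) (A *m u)) / Num.sqrt (Bf u u) <= opn A.
  by apply: ub; exists u.
rewrite ler_pdivrMr ?sqrtr_gt0 // => h.
have h0 := sqrtr_ge0 (Bf (A *m u) (A *m u)).
rewrite -(sqr_sqrtr (Bf_ge0 (A *m u))) -(sqr_sqrtr (Bf_ge0 u)) -exprMn.
move: h0 h; set a := Num.sqrt _; set b := Num.sqrt _; move=> h0 h; rewrite !expr2; nra.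
Qed.

Lemma opn_cs A u : (0 < n)%N -> Bf u (A *m u) <= opn A * Bf u u.
Proof. by move=> n0; have [k0 h] := opn_prop A n0; apply: Bf_cs. Qed.

End G.
Arguments Bf {R n} G u v.
Arguments opn {R n} G A.
Arguments ratioS {R n} G A.
Section Lin.
Variable R : realType.
Variable n : nat.
Variable G : 'M[R]_n.
Lemma BfDr u v w : Bf G u (v + w) = Bf G u v + Bf G u w.
Proof. by rewrite /Bf mulmxDr mxE. Qed.
Lemma BfNr u v : Bf G u (- v) = - Bf G u v.
Proof. by rewrite /Bf mulmxN mxE. Qed.
Lemma BfZr u k v : Bf G u (k *: v) = k * Bf G u v.
Proof. by rewrite /Bf -scalemxAr mxE. Qed.
End Lin.


Lemma derive_Bf (R : realType) n (G : 'M[R]_n) (Gd : forall i j, i != j -> G i j = 0)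
  (W W' : R -> 'cV[R]_n) t :
  (forall i, is_derive t (1:R) (fun s => W s i 0) (W' t i 0)) ->
  derive1 (fun s => Bf G (W s) (W s)) t = 2 * Bf G (W t) (W' t).
Proof.
move=> hW.
have -> : (fun s => Bf G (W s) (W s)) = \sum_(i < n) (fun s => G i i * (W s i 0 * W s i 0)).
  by rewrite fct_sumE; apply/funext => s; rewrite BfE.
rewrite derive1E.
have hd : forall i : 'I_n, is_derive t (1:R) (fun s => G i i * (W s i 0 * W s i 0))
   (G i i * (W t i 0 * W' t i 0 + W t i 0 * W' t i 0)).
  move=> i.
  have h1 := @is_deriveM R R _ _ t 1 _ _ (hW i) (hW i).
  have h2 := @is_deriveZ R R R _ (G i i) t 1 _ h1.
  exact: h2.
have hs := is_derive_sum hd.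
rewrite derive_val BfE // mulr_sumr; apply: eq_bigr => i _; ring.
Qed.

Section Spec.
Variable R : realType.
Variable m : nat.
Variable H : 'M[R]_m.
Hypothesis Hd : forall i j, i != j -> H i j = 0.
Hypothesis Hp : forall i, 0 < H i i.

Lemma kron2_d : forall i j, i != j -> kron2 H i j = 0.
Proof.
move=> i j; rewrite -(@splitK m m i) -(@splitK m m j) /kron2.
case: (fintype.split i) => a; case: (fintype.split j) => b /=;
  rewrite ?block_mxEul ?block_mxEur ?block_mxEdl ?block_mxEdr ?mxE // => hab; apply: Hd.
  by apply: contra hab => /eqP ->.
by apply: contra hab => /eqP ->.
Qed.

Lemma kron2_p : forall i, 0 < kron2 H i i.
Proof.
move=> i; rewrite -(@splitK m m i) /kron2.
by case: (fintype.split i) => a /=; rewrite ?block_mxEul ?block_mxEdr.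
Qed.

Lemma H_diagmx : H = diag_mx (\row_i H i i).
Proof.
apply/matrixP => i j; rewrite !mxE; case: (eqVneq i j) => [->|ij]; first by rewrite mulr1n.
by rewrite Hd // mulr0n.
Qed.

Lemma kron2_unit : kron2 H \in unitmx.
Proof.
rewrite unitmxE /kron2 det_ublock unitfE mulf_eq0 orbb H_diagmx det_diag.
rewrite prodf_seq_eq0; apply/hasPn => i _; rewrite mxE; exact: lt0r_neq0 (Hp i).
Qed.

End Spec.
Arguments H_diagmx {R m H}.
Arguments kron2_d {R m H}.
Arguments kron2_p {R m H}.
Arguments kron2_unit {R m H}.

Section Spec2.
Variable R : realType.
Variable m : nat.
Variable H D : 'M[R]_m.
Hypothesis Hd : forall i j, i != j -> H i j = 0.

Lemma diag_comm (c : 'cV[R]_m) : H *m diagc c = diagc c *m H.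
Proof.
rewrite {1 2}(H_diagmx Hd) /diagc mul_diag_mx mul_mx_diag.
apply/matrixP => i j; rewrite !mxE.
case: (eqVneq i j) => [->|ij]; first by rewrite mulrC.
by rewrite !mulr0n mulr0 mul0r.
Qed.

Lemma key1 (c w : 'cV[R]_m) :
  (w^T *m (H *m (diagc c *m D) + H *m (D *m diagc c)) *m w) 0 0
  = ((diagc c *m w)^T *m ((H *m D) + (H *m D)^T) *m w) 0 0.
Proof.
have tC : (diagc c)^T = diagc c by rewrite /diagc tr_diag_mx.
rewrite mulmxDr mulmxDl mulmxDr mulmxDl mxE [in RHS]mxE; congr (_ + _).
  by rewrite (mulmxA H) diag_comm trmx_mul tC !mulmxA.
have -> : (diagc c *m w)^T *m (H *m D)^T *m w = (w^T *m (H *m D) *m (diagc c *m w))^T.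
  by rewrite !trmx_mul trmxK mulmxA.
by rewrite [RHS]mxE !mulmxA.
Qed.

Lemma diagcN (c : 'cV[R]_m) : - diagc c = diagc (- c).
Proof. by rewrite /diagc !raddfN. Qed.

Lemma keyblock (cb w1 w2 : 'cV[R]_m) :
  Bf (kron2 H) (col_mx w1 w2) ((Lam cb *m kron2 D + kron2 D *m Lam cb) *m col_mx w1 w2) =
  ((diagc (- cb) *m w1)^T *m ((H *m D) + (H *m D)^T) *m w1) 0 0
  + ((diagc cb *m w2)^T *m ((H *m D) + (H *m D)^T) *m w2) 0 0.
Proof.
rewrite /Bf /kron2 /Lam tr_col_mx !mulmx_block !(mul0mx, mulmx0, addr0, add0r) add_block_mx.
rewrite !(mul0mx, mulmx0, addr0, add0r) mulmxA mul_row_block !(mul0mx, mulmx0, addr0, add0r).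
rewrite mul_row_block !(mul0mx, mulmx0, addr0, add0r) mul_row_col mxE diagcN.
by rewrite -!key1 -!mulmxDr !mulmxA.
Qed.
End Spec2.

Lemma diagc_mul (R : realType) m (c w : 'cV[R]_m) i : (diagc c *m w) i 0 = c i 0 * w i 0.
Proof. by rewrite /diagc mul_diag_mx !mxE. Qed.

Lemma delta_eval (R : realType) m (w : 'cV[R]_m) k : (w^T *m (delta_mx k (0 : 'I_1) : 'cV[R]_m)) 0 0 = w k 0.
Proof.
rewrite mxE (bigD1 k) //= big1 => [|j jk]; first by rewrite !mxE !eqxx /= mulr1 addr0.
by rewrite !mxE (negPf jk) /= mulr0.
Qed.

Lemma bnd_le (R : realType) (c x y r : R) : 0 < c -> -1 <= r <= 1 ->
  c * (x ^+ 2 + y ^+ 2 - 2 * r * x * y) >= 0.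
Proof.
move=> c0 /andP [r1 r2]; apply: mulr_ge0; first exact: ltW.
have h1 := sqr_ge0 (x - r * y).
have h2 : 0 <= (1 - r ^+ 2) * y ^+ 2.
  apply: mulr_ge0; last exact: sqr_ge0.
  rewrite subr_ge0 expr2; nra.
nra.
Qed.


Theorem mainTheorem3 (R : realType) (L : R) (N : nat)
  (D H : 'M[R]_N.+1) (cb a b c d : 'cV[R]_N.+1) (R0 RL : R)
  (W : R -> 'cV[R]_(N.+1 + N.+1)) :
  0 < L -> (1 <= N)%N ->
  is_diag_mx H -> posdef H ->
  (forall u v : 'cV[R]_N.+1,
     (u^T *m ((H *m D) + (H *m D)^T) *m v) 0 0
       = u ord_max 0 * v ord_max 0 - u ord0 0 * v ord0 0) ->
  (forall i, 0 < cb i 0) ->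
  -1 <= R0 <= 1 -> -1 <= RL <= 1 ->
  (forall (t : R) i, is_derive t (1 : R) (fun s : R => W s i 0)
                 (sbp_rhs D H cb a b c d R0 RL (W t) i 0)) ->
  forall t : R,
    derive1 (fun s => energy H (W s)) t
      <= 2 * (opnormH H (Btilde a b c d) + opnormH H (Mcbar D cb)) * energy H (W t).
Proof.
move=> L0 N1 /is_diag_mxP Hd0 Hpd hSBP cpos hR0 hRL hW t.
have Hd : forall i j, i != j -> H i j = 0 by move=> i j ij; apply: Hd0.
have Hp : forall i, 0 < H i i.
  move=> i; pose e : 'cV[R]_N.+1 := delta_mx i 0; have := Hpd e.
  change ((e^T *m H *m e) 0 0) with (Bf H e e).
  rewrite BfE // (bigD1 i) //= big1 => [|j ji]; last by rewrite !mxE (negPf ji) /= !mulr0.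
  rewrite !mxE !eqxx /= !mulr1 addr0; apply.
  apply/eqP => /matrixP /(_ i 0); rewrite !mxE !eqxx /= => /eqP; by rewrite oner_eq0.
pose G := kron2 H.
have Gd := kron2_d Hd; have Gp := kron2_p Hp.
have n0 : (0 < N.+1 + N.+1)%N by [].
change (fun s => energy H (W s)) with (fun s => Bf G (W s) (W s)).
rewrite (@derive_Bf _ _ G Gd W (fun t => sbp_rhs D H cb a b c d R0 RL (W t)) t (fun i => hW t i)).
change (opnormH H ?A) with (opn G A); change (energy H (W t)) with (Bf G (W t) (W t)).
set w := W t.
have hB := @opn_cs _ _ G Gd Gp (Btilde a b c d) w n0.
have hM := @opn_cs _ _ G Gd Gp (Mcbar D cb) w n0.
have hM0 := (@opn_prop _ _ G Gd Gp (Mcbar D cb) n0).1.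
have hE := @Bf_ge0 _ _ G Gd Gp w.
have binv : forall x, Bf G w (invmx G *m x) = (w^T *m x) 0 0.
  by move=> x; rewrite /Bf mulmxA -(mulmxA _ G) mulmxV ?kron2_unit // mulmx1.
have bcol : forall x y : 'cV[R]_N.+1, (w^T *m col_mx x y) 0 0 = ((usubmx w)^T *m x + (dsubmx w)^T *m y) 0 0.
  by move=> x y; rewrite -[in LHS](vsubmxK w) tr_col_mx mul_row_col.
have kb := @keyblock _ _ H D Hd cb (usubmx w) (dsubmx w); rewrite vsubmxK in kb.
rewrite /sbp_rhs /LamD !BfDr !BfNr !BfZr !binv !bcol mulmxBl -!scalemxAl BfDr BfNr !BfZr kb.
rewrite !hSBP !diagc_mul !mulmx0 addr0 add0r.
rewrite (@delta_eval _ _ (dsubmx w)) (@delta_eval _ _ (usubmx w)) !mxE.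
have b0 := @bnd_le _ (cb ord0 0) (w (lshift N.+1 ord0) 0) (w (rshift N.+1 ord0) 0) R0 (cpos ord0) hR0.
have bN := @bnd_le _ (cb ord_max 0) (w (rshift N.+1 ord_max) 0) (w (lshift N.+1 ord_max) 0) RL (cpos ord_max) hRL.
move: b0 bN hB hM hM0 hE.
set x10 := w (lshift N.+1 ord0) 0; set x20 := w (rshift N.+1 ord0) 0.
set x1N := w (lshift N.+1 ord_max) 0; set x2N := w (rshift N.+1 ord_max) 0.
set E := Bf G w w; set BB := Bf G w (Btilde a b c d *m w); set MM := Bf G w (Mcbar D cb *m w).
set oB := opn G (Btilde a b c d); set oM := opn G (Mcbar D cb).
set c0 := cb ord0 0; set cN := cb ord_max 0.
move=> b0 bN hB hM hM0 hE.
have hME : 0 <= oM * E by apply: mulr_ge0.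
move: b0 bN; rewrite !expr2 => b0 bN.
lra.
Qed.
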